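(* Let $t$ have a persistent craving representation $(\rhd,\nu,\phi)$ and let $x\in X$. Then $$\nu_{X\setminus\{x\}}(\succ_x)=\frac{\nu(\succ_x)}{1-\phi(M(\rhd,X\setminus\{x\}),x)\,(1-\nu(\succ_x))}.$$
   Context: $X$ is a finite set with at least two elements, $\mathcal{L}(X)$ its linear orders, $M(\succ,A)$ the $\succ$-maximal element of $A$. Given a linear order $\rhd$, the craving preferences $\{\succ_x\}_{x\in X}$ are: $x\succ_x y$ for all $y\ne x$, and for $y,z\ne x$, $y\succ_x z$ iff $y\rhd z$. A distribution $\nu$ supported on $\{\succ_x\}$ is craving monotonic w.r.t. $\rhd$ if $x\rhd y$ implies $\nu(\succ_x)>\nu(\succ_y)>0$. A persistence function is $\phi:X^2\to[0,1)$ with $\phi(x,x)=0$, $\phi(x,y)>0$ for $x\ne y$. A persistent craving representation $(\rhd,\nu,\phi)$, with $\nu$ craving monotonic, is the transition function $t(x,\succ_y)=\phi(x,y)\delta_{\succ_y}+(1-\phi(x,y))\nu$ and $t(x,\succ)=\nu$ for $\succ$ outside the support of $\nu$. For nonempty $A\subseteq X$, $\nu_A$ is the unique stationary distribution of the Markov chain on $\mathcal{L}(X)$ with $m_A(\succ,\succ')=t_{\succ'}(M(\succ,A),\succ)$. *)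

(* Defs.v *)
From mathcomp Require Import all_boot all_order all_algebra.
Set Implicit Arguments. Unset Strict Implicit. Unset Printing Implicit Defensive.
Import Order.TTheory GRing.Theory Num.Theory.
Local Open Scope ring_scope.

Section Defs.
Variable X : finType.

(* A strict linear order on X, encoded as a boolean relation r x y = "x > y". *)
Definition strict_linear (r : {ffun X -> {ffun X -> bool}}) : bool :=
  [&& [forall x, ~~ r x x],
      [forall x, forall y, (x != y) ==> (r x y || r y x)] &
      [forall x, forall y, forall z, r x y ==> r y z ==> r x z]].

Definition linord := {r : {ffun X -> {ffun X -> bool}} | strict_linear r}.

Definition lrel (r : linord) (x y : X) : bool := val r x y.

(* M(r, A): the r-maximal element of A (d is a dummy default, only used when A is empty). *)
Definition M (r : linord) (A : {set X}) (d : X) : X :=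
  odflt d [pick y in A | [forall z in A, (z != y) ==> lrel r y z]].

Definition crave_fun (rho : linord) (x : X) : {ffun X -> {ffun X -> bool}} :=
  [ffun y => [ffun z => ((y == x) && (z != x)) || [&& y != x, z != x & lrel rho y z]]].

Lemma crave_fun_linear rho x : strict_linear (crave_fun rho x).
Proof.
have /and3P [irr tot tr] := valP rho.
rewrite /lrel /=.
apply/and3P; split.
- apply/forallP => y; rewrite !ffunE.
  by case: (y =P x) => //= _; rewrite (forallP irr y).
- apply/forallP => y; apply/forallP => z; apply/implyP => nyz; rewrite !ffunE.
  case: (y =P x) => [eyx|/eqP nyx] /=; first by rewrite -eyx eq_sym nyz.
  case: (z =P x) => [->|/eqP nzx] //=; rewrite ?nyx ?nzx /=.
  by have := forallP (forallP tot y) z; rewrite nyz.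
- apply/forallP => y; apply/forallP => z; apply/forallP => w.
  rewrite !ffunE.
  case: (y =P x) => [->|/eqP nyx] /=.
    case: (z =P x) => [->|/eqP nzx]; case: (w =P x) => [->|/eqP nwx] /=; rewrite ?eqxx ?nzx ?nwx /= ?andbF ?orbF ?andbT /= ?implybT //.
  case: (z =P x) => [->|/eqP nzx]; case: (w =P x) => [->|/eqP nwx] /=;
    rewrite ?eqxx ?nzx ?nwx /= ?andbF ?orbF ?andbT /= ?implybT //.
  exact: (forallP (forallP (forallP tr y) z) w).
Qed.

Definition crave (rho : linord) (x : X) : linord :=
  exist _ (crave_fun rho x) (crave_fun_linear rho x).

Variable R : realFieldType.

Definition is_distr (mu : {ffun linord -> R}) : Prop :=
  (forall s, 0 <= mu s) /\ \sum_s mu s = 1.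

Definition supported_on_craving (rho : linord) (nu : {ffun linord -> R}) : Prop :=
  forall s, (forall x, s != crave rho x) -> nu s = 0.

Definition craving_monotonic (rho : linord) (nu : {ffun linord -> R}) : Prop :=
  forall x y, lrel rho x y -> nu (crave rho y) < nu (crave rho x) /\ 0 < nu (crave rho y).

Definition persistence (phi : X -> X -> R) : Prop :=
  (forall x y, 0 <= phi x y /\ phi x y < 1) /\
  (forall x, phi x x = 0) /\
  (forall x y, x != y -> 0 < phi x y).

Definition trans (rho : linord) (nu : {ffun linord -> R}) (phi : X -> X -> R)
  (y : X) (s : linord) : {ffun linord -> R} :=
  [ffun s' => if [pick z | s == crave rho z] is Some z
              then phi y z * (s' == s)%:R + (1 - phi y z) * nu s'
              else nu s'].

Definition chain (rho : linord) (nu : {ffun linord -> R}) (phi : X -> X -> R)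
  (A : {set X}) (d : X) (s s' : linord) : R :=
  trans rho nu phi (M s A d) s s'.

Definition stationary (m : linord -> linord -> R) (mu : {ffun linord -> R}) : Prop :=
  is_distr mu /\ forall s', mu s' = \sum_s mu s * m s s'.

End Defs.

(* Main.v *)
Require Import Defs.
From mathcomp Require Import all_boot all_order all_algebra.
From mathcomp Require Import ring lra.
Import Order.TTheory GRing.Theory Num.Theory.
Local Open Scope ring_scope.

Lemma M_eq (X : finType) (r : linord X) (A : {set X}) d y :
  y \in A -> (forall w, w \in A -> w != y -> lrel r y w) -> M r A d = y.
Proof.
move=> yA Hy; rewrite /M; case: pickP => [y' /andP [y'A /forallP H'] | Hn] /=.
- case: (eqVneq y' y) => // ne.
  have h1 : lrel r y' y by move: (H' y); rewrite yA eq_sym ne.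
  have h2 := Hy y' y'A ne.
  have /and3P [/forallP irr _ /forallP tr] := valP r.
  have := implyP (implyP (forallP (forallP (tr y') y) y') h1) h2.
  by rewrite (negbTE (irr y')).
- exfalso; move: (Hn y); rewrite yA /=; move/negbT/negP; apply.
  apply/forallP => w; apply/implyP => wA; apply/implyP => nw; exact: Hy.
Qed.

Lemma crave_inj (X : finType) (rho : linord X) z z' :
  crave rho z = crave rho z' -> z = z'.
Proof.
move=> /(congr1 val) /= E; case: (eqVneq z z') => // ne.
have := congr1 (fun f : {ffun X -> {ffun X -> bool}} => f z z') E.
rewrite /crave_fun !ffunE /= eqxx eq_sym ne (negbTE ne) /=.
by rewrite eqxx.
Qed.

Theorem proposition9 (X : finType) (R : realFieldType)
    (rho : linord X) (nu : {ffun linord X -> R}) (phi : X -> X -> R) (x : X) :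
  (1 < #|X|)%N ->
  is_distr nu -> supported_on_craving rho nu -> craving_monotonic rho nu ->
  persistence phi ->
  forall nuA : {ffun linord X -> R},
    stationary (chain rho nu phi (~: [set x]) x) nuA ->
    nuA (crave rho x) =
      nu (crave rho x) /
        (1 - phi (M rho (~: [set x]) x) x * (1 - nu (crave rho x))).
Proof.
move=> _ [Hnu _] _ _ [Hphi [Hphi0 _]] nuA [[_ Hsum] Hst].
set A := ~: [set x].
set cx := crave rho x.
set p := phi (M rho A x) x.
set v := nu cx.
have Mcx : M cx A x = M rho A x.
  rewrite /M; congr odflt; apply: eq_pick => y /=.
  case yA: (y \in A) => //=.
  apply: eq_forallb => z; case zA: (z \in A) => //=.
  move: yA zA; rewrite /A !in_setC !in_set1 => yx zx.
  rewrite /lrel /= /crave_fun !ffunE yx zx /=.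
by rewrite (negbTE yx).
have key : forall s, chain rho nu phi A x s cx =
    (s == cx)%:R * p + (1 - (s == cx)%:R * p) * v.
  move=> s; rewrite /chain /trans ffunE.
  case: pickP => [z /eqP Hz | Hn].
  - case: (eqVneq z x) => [ezx | nzx].
      rewrite ezx in Hz *; rewrite Hz -/cx.
      by rewrite eqxx Mcx -/p mulr1 mul1r.
    have ns : s != cx.
      by apply/eqP => E; rewrite Hz in E; move/crave_inj: E => E; rewrite E eqxx in nzx.
    have My : M s A x = z.
      apply: M_eq; first by rewrite /A in_setC in_set1.
      move=> w _ nw; rewrite Hz /lrel /= /crave_fun !ffunE eqxx /=; by rewrite nw.
    rewrite My Hphi0 eq_sym (negbTE ns) /=.
    by rewrite !mul0r.
  - have ns : s != cx by apply/eqP => E; have := Hn x; rewrite E eqxx.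
    by rewrite (negbTE ns) mul0r subr0 add0r mul1r.
have E : nuA cx = nuA cx * p + (1 - nuA cx * p) * v.
  rewrite {1}Hst.
  rewrite (eq_bigr (fun s => nuA s * v + (s == cx)%:R * (nuA s * p * (1 - v)))); last first.
    by move=> s _; rewrite key; ring.
  rewrite big_split /= -mulr_suml Hsum (bigD1 cx) //= big1 ?addr0; last first.
    by move=> s /negbTE ->; rewrite mul0r.
  rewrite eqxx /= mul1r; ring.
have [p0 p1] : 0 <= p /\ p < 1 := Hphi _ _.
have v0 : 0 <= v := Hnu cx.
have D0 : 1 - p * (1 - v) != 0.
  have pv : 0 <= p * v by apply: mulr_ge0.
  have h : 0 < 1 - p * (1 - v) by rewrite mulrBr mulr1; lra.
  by rewrite gt_eqF.
apply: (mulIf D0); rewrite divfK //.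
apply/eqP; rewrite -subr_eq0; apply/eqP.
have -> : nuA cx * (1 - p * (1 - v)) - v = nuA cx - (nuA cx * p + (1 - nuA cx * p) * v) by ring.
by rewrite -E subrr.
Qed.
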